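(* Let $r\in C(0,1)$ be such that $\inf_{x\in[a,b]}r(x)>0$ for every $[a,b]\subset(0,1)$, and let $\gamma>1$. Then there exists $\delta>0$ such that $B_{r,\gamma,\delta}\ne\varnothing$.
   Context: $A_{r,\gamma}=\{q\in L_{1,loc}(0,1): q\ge0,\ \int_0^1 rq^\gamma\,dx\le1\}$. For a nonnegative $q\in C(0,1)$ with compact support in $(0,1)$, $\lambda_0(q)$ is the smallest eigenvalue of $-y''+qy=\lambda y$, $y(0)=y(1)=0$. $B_{r,\gamma,\delta}$ is the set of $q\in A_{r,\gamma}$ that are continuous on $(0,1)$ with compact support in $(0,1)$ and satisfy $\lambda_0(q)\ge\pi^2+\delta$. *)

(* Defs.v *)
From Stdlib Require Import Reals Lra.
From Coquelicot Require Import Coquelicot.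
Open Scope R_scope.

Definition rpow (x g : R) : R := if Req_EM_T x 0 then 0 else Rpower x g.

Definition cont_open01 (f : R -> R) : Prop :=
  forall x, 0 < x < 1 -> continuous f x.

Definition compact_support01 (q : R -> R) : Prop :=
  exists a b, 0 < a /\ a <= b /\ b < 1 /\
    forall x, (x < a \/ b < x) -> q x = 0.

Definition in_A (r : R -> R) (g : R) (q : R -> R) : Prop :=
  (forall x, 0 < x < 1 -> 0 <= q x) /\
  ex_RInt (fun x => r x * rpow (q x) g) 0 1 /\
  RInt (fun x => r x * rpow (q x) g) 0 1 <= 1.

Definition is_eigenvalue (q : R -> R) (l : R) : Prop :=
  exists y dy : R -> R,
    (forall x, 0 <= x <= 1 ->
       filterlim y (within (fun t => 0 <= t <= 1) (locally x)) (locally (y x))) /\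
    (forall x, 0 < x < 1 ->
       is_derive y x (dy x) /\ is_derive dy x (q x * y x - l * y x)) /\
    y 0 = 0 /\ y 1 = 0 /\
    (exists x, 0 < x < 1 /\ y x <> 0).

Definition is_smallest_eigenvalue (q : R -> R) (l : R) : Prop :=
  is_eigenvalue q l /\ forall m, is_eigenvalue q m -> l <= m.

Definition in_B (r : R -> R) (g d : R) (q : R -> R) : Prop :=
  in_A r g q /\ cont_open01 q /\ compact_support01 q /\
  exists l0, is_smallest_eigenvalue q l0 /\ PI ^ 2 + d <= l0.

(* Main.v *)
Require Import Defs.
From Stdlib Require Import Reals.
From Coquelicot Require Import Coquelicot.
Open Scope R_scope.
From Stdlib Require Import Reals Lra Psatz.
From Coquelicot Require Import Coquelicot.
Open Scope R_scope.

Lemma sin_lb3 a : 0 <= a <= PI -> a - a^3/6 <= sin a.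
Proof. intros H. destruct (SIN a) as [H1 _]; try lra.
 unfold sin_lb, sin_approx, sin_term in H1. simpl in H1.
 match type of H1 with ?X <= _ => assert (E : X = a - a^3/6 + a^5/120 - a^7/5040) by field end.
 rewrite E in H1. pose proof PI_4. assert (a^2 <= 16) by nra.
 assert (0 <= a^5/120 - a^7/5040).
 { replace (a^5/120 - a^7/5040) with (a^5 * (42 - a^2)/5040) by field.
   apply Rmult_le_pos; [|lra]. apply Rmult_le_pos; [apply pow_le; lra|lra]. }
 lra.
Qed.

Lemma sin_ub1 a : 0 <= a <= PI -> sin a <= a.
Proof. intros H. destruct (sin_bound a 0) as [_ H1]; try lra.
 unfold sin_approx, sin_term in H1. simpl in H1.
 match type of H1 with _ <= ?X => assert (E : X = a - a^3/6 + a^5/120) by field end.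
 rewrite E in H1. pose proof PI_4. assert (a^2 <= 16) by nra.
 assert (a^5/120 <= a^3/6).
 { replace (a^3/6 - a^5/120) with (a^3 * (20 - a^2)/120) by field.
   assert (0 <= a^3 * (20 - a^2)/120). apply Rmult_le_pos; [|lra]. apply Rmult_le_pos; [apply pow_le; lra|lra]. lra. }
 lra.
Qed.

Lemma cos_ub4 a : 0 <= a <= 1 -> cos a <= 1 - a^2/2 + a^4/24.
Proof. intros H. pose proof PI2_3_2. destruct (cos_bound a 0) as [_ H1]; try lra.
 unfold cos_approx, cos_term in H1. simpl in H1.
 match type of H1 with _ <= ?X => assert (E : X = 1 - a^2/2 + a^4/24) by field end.
 lra.
Qed.

Lemma cos_lb2 a : 0 <= a <= 1 -> 1 - a^2/2 <= cos a.
Proof. intros H. pose proof PI2_3_2. destruct (cos_bound a 0) as [H1 _]; try lra.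
 unfold cos_approx, cos_term in H1. simpl in H1.
 match type of H1 with ?X <= _ => assert (E : X = 1 - a^2/2) by field end.
 lra.
Qed.

Lemma sin_half a : 0 <= a <= 1 -> a/2 <= sin a.
Proof. intros H. pose proof PI2_3_2. pose proof (sin_lb3 a ltac:(lra)). nra. Qed.

Lemma tan_gt a : 0 < a <= 1/2 -> a * cos a < sin a.
Proof. intros H. pose proof PI2_3_2. pose proof (sin_lb3 a ltac:(lra)). pose proof (cos_ub4 a ltac:(lra)).
 assert (0 < a^3/3 - a^5/24).
 { replace (a^3/3 - a^5/24) with (a^3 * (8 - a^2)/24) by field.
   apply Rmult_lt_0_compat; [|lra]. apply Rmult_lt_0_compat; [apply pow_lt; lra|nra]. }
 nra.
Qed.
Set Bullet Behavior "Strict Subproofs".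

Lemma glue (f g1 g2 : R -> R) x l d : 0 < d ->
  (forall t, x - d < t <= x -> f t = g1 t) ->
  (forall t, x <= t < x + d -> f t = g2 t) ->
  derivable_pt_lim g1 x l -> derivable_pt_lim g2 x l -> derivable_pt_lim f x l.
Proof.
  intros Hd H1 H2 D1 D2 eps Heps.
  destruct (D1 eps Heps) as [d1 P1]. destruct (D2 eps Heps) as [d2 P2].
  assert (Hm : 0 < Rmin d (Rmin d1 d2)).
  { destruct d1, d2; simpl. repeat apply Rmin_pos; auto. }
  exists (mkposreal _ Hm). simpl. intros h Hh Hah.
  pose proof (Rmin_l d (Rmin d1 d2)). pose proof (Rmin_r d (Rmin d1 d2)).
  pose proof (Rmin_l d1 d2). pose proof (Rmin_r d1 d2).
  destruct (Rlt_le_dec h 0) as [Hn|Hp].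
  - rewrite Rabs_left in Hah by lra.
    rewrite (H1 (x+h)) by lra. rewrite (H1 x) by lra. apply P1; auto. rewrite Rabs_left; lra.
  - rewrite Rabs_right in Hah by lra.
    rewrite (H2 (x+h)) by lra. rewrite (H2 x) by lra. apply P2; auto. rewrite Rabs_right; lra.
Qed.

Definition pw (c : R) (f1 f2 f3 : R -> R) (t : R) : R :=
  if Rle_dec t c then f1 t else if Rlt_dec t (1 - c) then f2 t else f3 t.

Lemma pw_derive c (f1 f2 f3 g1 g2 g3 : R -> R) : c < 1 - c ->
  (forall x, is_derive f1 x (g1 x)) -> (forall x, is_derive f2 x (g2 x)) ->
  (forall x, is_derive f3 x (g3 x)) ->
  f1 c = f2 c -> g1 c = g2 c -> f2 (1-c) = f3 (1-c) -> g2 (1-c) = g3 (1-c) ->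
  forall x, is_derive (pw c f1 f2 f3) x (pw c g1 g2 g3 x).
Proof.
  intros Hc D1 D2 D3 E1 E2 E3 E4 x. apply is_derive_Reals.
  assert (R1 : forall y, derivable_pt_lim f1 y (g1 y)) by (intro; apply is_derive_Reals; auto).
  assert (R2 : forall y, derivable_pt_lim f2 y (g2 y)) by (intro; apply is_derive_Reals; auto).
  assert (R3 : forall y, derivable_pt_lim f3 y (g3 y)) by (intro; apply is_derive_Reals; auto).
  destruct (Rlt_le_dec x c) as [H|H].
  - replace (pw c g1 g2 g3 x) with (g1 x) by (unfold pw; destruct (Rle_dec x c); lra).
    apply (glue (pw c f1 f2 f3) f1 f1 x (g1 x) (c - x)); try lra; auto;
      intros t Ht; unfold pw; destruct (Rle_dec t c); lra || auto.
  - destruct (Req_dec x c) as [Hx|Hx].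
    + subst x. replace (pw c g1 g2 g3 c) with (g1 c) by (unfold pw; destruct (Rle_dec c c); lra).
      apply (glue (pw c f1 f2 f3) f1 f2 c (g1 c) (1 - c - c)); try lra; auto.
      * intros t Ht; unfold pw; destruct (Rle_dec t c); [auto|lra].
      * intros t Ht; unfold pw; destruct (Rle_dec t c).
        -- assert (t = c) by lra. subst; auto.
        -- destruct (Rlt_dec t (1-c)); [auto|lra].
      * rewrite E2; auto.
    + destruct (Rlt_le_dec x (1 - c)) as [H'|H'].
      * replace (pw c g1 g2 g3 x) with (g2 x) by (unfold pw; destruct (Rle_dec x c); [lra|];
           destruct (Rlt_dec x (1-c)); lra).
        pose proof (Rmin_l (x - c) (1 - c - x)); pose proof (Rmin_r (x - c) (1 - c - x)).
        apply (glue (pw c f1 f2 f3) f2 f2 x (g2 x) (Rmin (x - c) (1 - c - x))); [apply Rmin_pos; lra|..]; try exact (R2 x).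
        all: intros t Ht; unfold pw; destruct (Rle_dec t c); [lra|];
             destruct (Rlt_dec t (1-c)); [auto|lra].
      * replace (pw c g1 g2 g3 x) with (g3 x) by (unfold pw; destruct (Rle_dec x c); [lra|];
           destruct (Rlt_dec x (1-c)); lra).
        destruct (Req_dec x (1-c)) as [Hy|Hy].
        -- subst x. apply (glue (pw c f1 f2 f3) f2 f3 (1-c) (g3 (1-c)) (1 - c - c)); try lra; auto.
           ++ intros t Ht; unfold pw; destruct (Rle_dec t c); [lra|].
              destruct (Rlt_dec t (1-c)); [auto|]. assert (t = 1-c) by lra. subst; auto.
           ++ intros t Ht; unfold pw; destruct (Rle_dec t c); [lra|].
              destruct (Rlt_dec t (1-c)); [lra|auto].
           ++ rewrite <- E4; auto.
        -- apply (glue (pw c f1 f2 f3) f3 f3 x (g3 x) (x - (1 - c))); [lra|..]; try exact (R3 x).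
           all: intros t Ht; unfold pw; destruct (Rle_dec t c); [lra|];
             destruct (Rlt_dec t (1-c)); [lra|auto].
Qed.
Definition sS (e : R) := cos e.
Definition kK (e : R) := sin e.
Definition uU (e : R) := PI/2 - e.
Definition wW (e : R) := 2 * (uU e + kK e / sS e).
Definition cC (e : R) := uU e / wW e.
Definition BB (e : R) := wW e ^ 2 * sS e / 2.
Definition AA (e : R) := sS e + kK e ^ 2 / (2 * sS e).
Definition Pa (e t : R) := AA e - BB e * (t - 1/2) ^ 2.

Lemma sk_bd e : 0 < e <= 1/2 -> 7/8 <= sS e <= 1 /\ 0 < kK e <= e.
Proof. intros H. pose proof PI2_3_2. unfold sS, kK.
  pose proof (cos_lb2 e ltac:(lra)). pose proof (COS_bound e). pose proof (sin_ub1 e ltac:(lra)).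
  pose proof (sin_gt_0 e ltac:(lra) ltac:(lra)). nra. Qed.

Lemma w_gt e : 0 < e <= 1/2 -> PI < wW e.
Proof. intros H. destruct (sk_bd e H) as [H1 H2]. pose proof (tan_gt e H).
  unfold wW, uU. fold (sS e) (kK e) in *.
  assert (e < kK e / sS e). { apply Rmult_lt_reg_r with (sS e). lra. field_simplify; lra. }
  lra. Qed.

Lemma w_le e : 0 < e <= 1/2 -> wW e <= 6.
Proof. intros H. destruct (sk_bd e H) as [H1 H2]. pose proof PI_4.
  unfold wW, uU.
  assert (kK e / sS e <= 1). { apply Rmult_le_reg_r with (sS e). lra. field_simplify; lra. }
  lra. Qed.

Lemma wc e : 0 < e <= 1/2 -> wW e * cC e = uU e.
Proof. intros H. pose proof (w_gt e H). pose proof PI_RGT_0. unfold cC. field. lra. Qed.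

Lemma half_c e : 0 < e <= 1/2 -> 1/2 - cC e = kK e / (sS e * wW e).
Proof. intros H. pose proof (w_gt e H). pose proof PI_RGT_0. destruct (sk_bd e H).
  unfold cC. replace (uU e) with (wW e / 2 - kK e / sS e) by (unfold wW; field; lra).
  field. split; lra. Qed.

Lemma c_bd e : 0 < e <= 1/2 -> 1/4 <= cC e < 1/2.
Proof. intros H. pose proof (w_gt e H). pose proof PI_RGT_0. destruct (sk_bd e H).
  pose proof (half_c e H). pose proof PI2_3_2.
  assert (0 < kK e / (sS e * wW e)) by (apply Rdiv_lt_0_compat; nra).
  split; [|lra].
  pose proof (wc e H).
  assert (kK e / sS e <= 4/7). { apply Rmult_le_reg_r with (sS e). lra. field_simplify; lra. }
  assert (wW e <= 4 * uU e) by (unfold wW, uU in *; lra).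
  nra. Qed.

Lemma Pa_c e : 0 < e <= 1/2 -> Pa e (cC e) = sS e /\ Pa e (1 - cC e) = sS e.
Proof. intros H. pose proof (w_gt e H). pose proof PI_RGT_0. destruct (sk_bd e H).
  pose proof (half_c e H). unfold Pa.
  replace (cC e - 1/2) with (- (kK e / (sS e * wW e))) by lra.
  replace (1 - cC e - 1/2) with (kK e / (sS e * wW e)) by lra.
  unfold AA, BB. split; field; split; lra. Qed.
Definition Yf (e : R) := pw (cC e) (fun t => sin (wW e * t)) (Pa e) (fun t => sin (wW e * (1 - t))).
Definition DYf (e : R) := pw (cC e) (fun t => wW e * cos (wW e * t)) (fun t => - (2 * BB e * (t - 1/2)))
   (fun t => - (wW e * cos (wW e * (1 - t)))).
Definition D2Yf (e : R) := pw (cC e) (fun t => - (wW e ^ 2 * sin (wW e * t))) (fun _ => - (2 * BB e))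
   (fun t => - (wW e ^ 2 * sin (wW e * (1 - t)))).
Definition Qf (e t : R) := wW e ^ 2 * (1 - sS e / ((sS e + Pa e t + Rabs (Pa e t - sS e)) / 2)).

Lemma sin_u e : 0 < e <= 1/2 -> sin (wW e * cC e) = sS e /\ cos (wW e * cC e) = kK e.
Proof. intros H. rewrite wc by auto. unfold uU, sS, kK. rewrite sin_shift, cos_shift. auto. Qed.

Lemma Y_derive e : 0 < e <= 1/2 -> forall x, is_derive (Yf e) x (DYf e x).
Proof. intros H. pose proof (c_bd e H) as Hc. destruct (Pa_c e H) as [P1 P2].
  destruct (sin_u e H) as [S1 S2]. pose proof (half_c e H). pose proof (w_gt e H). pose proof PI_RGT_0.
  destruct (sk_bd e H).
  apply pw_derive.
  - lra.
  - intro x. auto_derive; auto. unfold Rminus; ring.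
  - intro x. unfold Pa. auto_derive; auto. unfold Rminus; ring.
  - intro x. auto_derive; auto. unfold Rminus; ring.
  - rewrite S1, P1; auto.
  - rewrite S2. replace (cC e - 1/2) with (- (kK e / (sS e * wW e))) by lra. unfold BB. field; repeat split; lra.
  - rewrite P2. replace (1 - (1 - cC e)) with (cC e) by ring. rewrite S1; auto.
  - replace (1 - (1 - cC e)) with (cC e) by ring. rewrite S2.
    replace (1 - cC e - 1/2) with (kK e / (sS e * wW e)) by lra. unfold BB. field; repeat split; lra.
Qed.

Lemma DY_derive e : 0 < e <= 1/2 -> forall x, is_derive (DYf e) x (D2Yf e x).
Proof. intros H. pose proof (c_bd e H) as Hc.
  destruct (sin_u e H) as [S1 S2]. pose proof (half_c e H). pose proof (w_gt e H). pose proof PI_RGT_0.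
  destruct (sk_bd e H).
  apply pw_derive.
  - lra.
  - intro x. auto_derive; auto. unfold Rminus; ring.
  - intro x. auto_derive; auto. unfold Rminus; ring.
  - intro x. auto_derive; auto. unfold Rminus; ring.
  - rewrite S2. replace (cC e - 1/2) with (- (kK e / (sS e * wW e))) by lra. unfold BB. field; repeat split; lra.
  - rewrite S1. unfold BB. field.
  - replace (1 - (1 - cC e)) with (cC e) by ring. rewrite S2.
    replace (1 - cC e - 1/2) with (kK e / (sS e * wW e)) by lra. unfold BB. field; repeat split; lra.
  - replace (1 - (1 - cC e)) with (cC e) by ring. rewrite S1. unfold BB. field.
Qed.

Lemma Pa_diff e t : 0 < e <= 1/2 -> Pa e t - sS e = BB e * ((1/2 - cC e)^2 - (t - 1/2)^2).
Proof. intros H. destruct (Pa_c e H) as [P1 _]. rewrite <- P1. unfold Pa. ring. Qed.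

Lemma BB_pos e : 0 < e <= 1/2 -> 0 < BB e.
Proof. intros H. pose proof (w_gt e H). pose proof PI_RGT_0. destruct (sk_bd e H).
  unfold BB. apply Rmult_lt_0_compat; [|lra]. apply Rmult_lt_0_compat; [|lra]. nra. Qed.

Lemma Pa_out e t : 0 < e <= 1/2 -> (t <= cC e \/ 1 - cC e <= t) -> Pa e t <= sS e.
Proof. intros H Ht. pose proof (Pa_diff e t H).
  pose proof (BB_pos e H). pose proof (c_bd e H).
  assert ((1/2 - cC e)^2 <= (t - 1/2)^2) by (destruct Ht; nra).
  assert (0 <= BB e * ((t - 1/2)^2 - (1/2 - cC e)^2)) by (apply Rmult_le_pos; lra). lra. Qed.

Lemma Pa_in e t : 0 < e <= 1/2 -> cC e <= t <= 1 - cC e -> sS e <= Pa e t <= AA e.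
Proof. intros H Ht. pose proof (Pa_diff e t H).
  pose proof (BB_pos e H). pose proof (c_bd e H).
  assert ((t - 1/2)^2 <= (1/2 - cC e)^2) by nra.
  assert (0 <= BB e * ((1/2 - cC e)^2 - (t - 1/2)^2)) by (apply Rmult_le_pos; lra).
  assert (0 <= BB e * (t - 1/2)^2) by (apply Rmult_le_pos; [lra| apply pow2_ge_0]).
  unfold Pa in *. lra. Qed.

Lemma Q_out e t : 0 < e <= 1/2 -> Pa e t <= sS e -> Qf e t = 0.
Proof. intros H Hp. destruct (sk_bd e H). unfold Qf. rewrite Rabs_left1 by lra.
  replace ((sS e + Pa e t + - (Pa e t - sS e)) / 2) with (sS e) by field.
  field. lra. Qed.

Lemma Q_in e t : 0 < e <= 1/2 -> sS e <= Pa e t -> Qf e t = wW e ^ 2 * (1 - sS e / Pa e t).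
Proof. intros H Hp. destruct (sk_bd e H). unfold Qf. rewrite Rabs_right by lra.
  replace ((sS e + Pa e t + (Pa e t - sS e)) / 2) with (Pa e t) by field. auto. Qed.

Lemma Y_eq e : 0 < e <= 1/2 -> forall x, D2Yf e x = Qf e x * Yf e x - wW e ^ 2 * Yf e x.
Proof. intros H x. pose proof (c_bd e H). destruct (sk_bd e H). unfold D2Yf, Yf, pw.
  destruct (Rle_dec x (cC e)).
  - rewrite Q_out; auto. ring. apply Pa_out; auto.
  - destruct (Rlt_dec x (1 - cC e)).
    + pose proof (Pa_in e x H ltac:(lra)). rewrite Q_in by (auto; lra). unfold BB. field; repeat split; lra.
    + rewrite Q_out; auto. ring. apply Pa_out; auto. lra.
Qed.

Lemma Y_pos e : 0 < e <= 1/2 -> forall x, 0 < x < 1 -> 0 < Yf e x.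
Proof. intros H x Hx. pose proof (c_bd e H). destruct (sk_bd e H). pose proof (wc e H).
  pose proof (w_gt e H). pose proof PI_RGT_0. unfold Yf, pw. unfold uU in *.
  destruct (Rle_dec x (cC e)).
  - apply sin_gt_0; nra.
  - destruct (Rlt_dec x (1 - cC e)).
    + pose proof (Pa_in e x H ltac:(lra)). lra.
    + apply sin_gt_0; nra.
Qed.

Lemma Q_nonneg e t : 0 < e <= 1/2 -> 0 <= Qf e t.
Proof. intros H. destruct (Rle_dec (Pa e t) (sS e)).
  - rewrite Q_out; auto; lra.
  - destruct (sk_bd e H). rewrite Q_in by (auto; lra). apply Rmult_le_pos. nra.
    assert (sS e / Pa e t <= 1). { apply Rmult_le_reg_r with (Pa e t). lra. field_simplify; lra. } lra.
Qed.

Lemma Q_small e t : 0 < e <= 1/2 -> Qf e t <= 36 * e ^ 2.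
Proof. intros H. destruct (Rle_dec (Pa e t) (sS e)).
  - rewrite Q_out; auto. pose proof (pow2_ge_0 e). lra.
  - destruct (sk_bd e H) as [Hs Hk]. pose proof (w_le e H) as Hw. pose proof (w_gt e H) as Hw'. pose proof PI_RGT_0.
    pose proof (BB_pos e H) as HB.
    assert (HA : Pa e t <= AA e).
    { assert (0 <= BB e * (t - 1/2)^2) by (apply Rmult_le_pos; [lra| apply pow2_ge_0]).
      unfold Pa; lra. }
    rewrite Q_in by (auto; lra).
    set (p := Pa e t) in *. set (s := sS e) in *. set (k := kK e) in *. set (w := wW e) in *.
    assert (E1 : 1 - s / p = (p - s) / p) by (field; lra). rewrite E1.
    assert (E2 : p - s <= k ^ 2 / (2 * s)) by (unfold AA in HA; fold s k in HA; lra).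
    assert (E3 : (p - s) / p <= (p - s) / s).
    { unfold Rdiv. apply Rmult_le_compat_l. lra. apply Rinv_le_contravar; lra. }
    assert (E4 : (p - s) / s <= k ^ 2 / (2 * s) / s).
    { unfold Rdiv. apply Rmult_le_compat_r. left; apply Rinv_0_lt_compat; lra. exact E2. }
    assert (E5 : k ^ 2 / (2 * s) / s <= e ^ 2).
    { replace (k ^ 2 / (2 * s) / s) with (k^2 / (2 * s^2)) by (field; lra).
      assert (Hs2 : 1 <= 2 * s ^ 2) by nra.
      assert (k^2 <= e^2) by nra.
      apply Rmult_le_reg_r with (2 * s ^ 2). lra.
      replace (k ^ 2 / (2 * s ^ 2) * (2 * s ^ 2)) with (k ^ 2) by (field; lra).
      assert (0 <= e^2) by nra. nra. }
    assert (E6 : 0 <= (p - s) / p) by (apply Rdiv_le_0_compat; lra).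
    assert (w ^ 2 <= 36) by nra.
    assert (E7 : (p - s) / p <= e ^ 2) by lra.
    assert (0 <= w^2) by nra.
    apply Rle_trans with (36 * ((p - s)/p)). apply Rmult_le_compat_r; lra.
    lra.
Qed.
Lemma within_eps (z : R -> R) x : filterlim z (within (fun t => 0<=t<=1) (locally x)) (locally (z x)) ->
  forall eps, 0 < eps -> exists d, 0 < d /\ forall t, 0<=t<=1 -> Rabs (t - x) < d -> Rabs (z t - z x) < eps.
Proof. intros Hf eps He. destruct (proj1 (filterlim_locally _ _) Hf (mkposreal eps He)) as [d Hd].
  exists d. split. apply cond_pos. intros t Ht Htx. specialize (Hd t). apply Hd; auto. Qed.

Lemma der_cont (f : R -> R) x l : is_derive f x l -> continuity_pt f x.
Proof. intros H. apply continuity_pt_filterlim. apply (ex_derive_continuous f x). exists l; auto. Qed.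

Lemma near0 (z dz : R -> R) (m w c : R) : 0 < c -> c <= 1 -> 0 < w ->
  (forall eps, 0 < eps -> exists d, 0 < d /\ forall t, 0 <= t < d -> Rabs (z t) < eps) ->
  (forall x, 0 < x < c -> is_derive z x (dz x) /\ is_derive dz x (- m * z x)) ->
  forall eps, 0 < eps -> exists d, 0 < d /\ forall t, 0 < t < d ->
   Rabs (z t * dz t - z t ^ 2 * (w * cos (w * t)) / sin (w * t)) <= eps.
Proof.
  intros Hc Hc1 Hw Hcont Hder eps Heps.
  destruct (Hcont 1 Rlt_0_1) as [d1 [Hd1 Hz1]].
  set (a := Rmin d1 c).
  assert (Ha : 0 < a) by (apply Rmin_pos; lra).
  assert (Ha1 : a <= d1) by apply Rmin_l. assert (Ha2 : a <= c) by apply Rmin_r.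
  set (p := a / 2).
  set (K := Rabs (dz p) + Rabs m).
  assert (HK0 : 0 <= K) by (unfold K; pose proof (Rabs_pos (dz p)); pose proof (Rabs_pos m); lra).
  assert (Cl1 : forall t, 0 < t < a -> Rabs (dz t) <= K).
  { intros t Ht.
    destruct (MVT_gen dz p t (fun x => - m * z x)) as [xi [Hxi Heq]].
    - intros x Hx. pose proof (Rmin_l p t). pose proof (Rmin_r p t). pose proof (Rmax_l p t).
      pose proof (Rmax_lub p t a ltac:(unfold p; lra) ltac:(lra)).
      apply (Hder x). pose proof (Rmin_glb p t 0 ltac:(unfold p; lra) ltac:(lra)). lra.
    - intros x Hx. pose proof (Rmin_glb_lt p t 0 ltac:(unfold p; lra) ltac:(lra)).
      pose proof (Rmax_lub_lt p t a ltac:(unfold p; lra) ltac:(lra)).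
      apply (der_cont _ _ _ (proj2 (Hder x ltac:(lra)))).
    - pose proof (Rmin_glb_lt p t 0 ltac:(unfold p; lra) ltac:(lra)).
      pose proof (Rmax_lub_lt p t a ltac:(unfold p; lra) ltac:(lra)).
      assert (Hzx : Rabs (z xi) < 1) by (apply Hz1; lra).
      assert (Htp : Rabs (t - p) <= 1) by (unfold p; apply Rabs_le; lra).
      assert (Rabs (dz t - dz p) <= Rabs m).
      { rewrite Heq. rewrite !Rabs_mult, Rabs_Ropp.
        pose proof (Rabs_pos m). pose proof (Rabs_pos (z xi)). pose proof (Rabs_pos (t - p)).
        assert (Rabs (z xi) * Rabs (t - p) <= 1) by nra. nra. }
      pose proof (Rabs_triang_inv (dz t) (dz p)). unfold K. lra. }
  assert (Cl2 : forall t, 0 < t < a -> Rabs (z t) <= K * t).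
  { intros t Ht. apply Rnot_lt_le. intro Hlt.
    set (eta := (Rabs (z t) - K * t) / 2).
    assert (Heta : 0 < eta) by (unfold eta; lra).
    destruct (Hcont eta Heta) as [d2 [Hd2 Hz2]].
    set (s := Rmin (d2 / 2) (t / 2)).
    assert (Hs : 0 < s) by (apply Rmin_pos; lra).
    assert (Hs1 : s <= d2 / 2) by apply Rmin_l. assert (Hs2 : s <= t / 2) by apply Rmin_r.
    assert (Hzs : Rabs (z s) < eta) by (apply Hz2; lra).
    destruct (MVT_gen z s t dz) as [xi [Hxi Heq]].
    - intros x Hx. rewrite Rmin_left in Hx by lra. rewrite Rmax_right in Hx by lra.
      apply (Hder x). lra.
    - intros x Hx. rewrite Rmin_left in Hx by lra. rewrite Rmax_right in Hx by lra.
      apply (der_cont _ _ _ (proj1 (Hder x ltac:(lra)))).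
    - rewrite Rmin_left in Hxi by lra. rewrite Rmax_right in Hxi by lra.
      assert (Hdx : Rabs (dz xi) <= K) by (apply Cl1; lra).
      assert (Rabs (z t - z s) <= K * t).
      { rewrite Heq, Rabs_mult. rewrite (Rabs_right (t - s)) by lra.
        pose proof (Rabs_pos (dz xi)). nra. }
      pose proof (Rabs_triang_inv (z t) (z s)). unfold eta in *. lra. }
  set (d := Rmin a (Rmin (1 / w) (eps / (3 * K ^ 2 + 1)))).
  assert (Hd : 0 < d).
  { apply Rmin_pos; [lra|apply Rmin_pos]. apply Rdiv_lt_0_compat; lra.
    apply Rdiv_lt_0_compat; [lra|]. pose proof (pow2_ge_0 K). lra. }
  exists d. split; [exact Hd|]. intros t Ht.
  assert (Hda : d <= a) by apply Rmin_l.
  assert (Hdw : d <= 1 / w) by (eapply Rle_trans; [apply Rmin_r|apply Rmin_l]).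
  assert (Hde : d <= eps / (3 * K ^ 2 + 1)) by (eapply Rle_trans; [apply Rmin_r|apply Rmin_r]).
  assert (Hwt : w * t <= 1).
  { apply Rle_trans with (w * (1 / w)). apply Rmult_le_compat_l; lra. right; field; lra. }
  assert (HS : w * t / 2 <= sin (w * t)) by (apply sin_half; split; nra).
  assert (HSp : 0 < sin (w * t)) by nra.
  assert (HC : Rabs (cos (w * t)) <= 1) by (apply Rabs_le; apply COS_bound).
  assert (Hz : Rabs (z t) <= K * t) by (apply Cl2; lra).
  assert (Hdz : Rabs (dz t) <= K) by (apply Cl1; lra).
  set (X := z t ^ 2 * (w * cos (w * t)) / sin (w * t)).
  assert (HX : Rabs X <= 2 * K ^ 2 * t).
  { assert (E : Rabs X * sin (w * t) = Rabs (z t) ^ 2 * w * Rabs (cos (w * t))).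
    { unfold X. rewrite <- (Rabs_right (sin (w * t))) at 2 by lra.
      rewrite <- Rabs_mult. replace (z t ^ 2 * (w * cos (w * t)) / sin (w * t) * sin (w * t))
        with (z t ^ 2 * w * cos (w * t)) by (field; lra).
      rewrite !Rabs_mult. rewrite (Rabs_right w) by lra. rewrite <- RPow_abs. ring. }
    assert (E2 : Rabs X * sin (w * t) <= (K * t) ^ 2 * w).
    { rewrite E. pose proof (Rabs_pos (z t)). pose proof (Rabs_pos (cos (w * t))).
      assert (Rabs (z t) ^ 2 <= (K * t) ^ 2) by (apply pow_incr; lra).
      assert (0 <= Rabs (z t) ^ 2) by (apply pow_le; lra).
      apply Rle_trans with (Rabs (z t) ^ 2 * w * 1). apply Rmult_le_compat_l; nra. nra. }
    pose proof (Rabs_pos X).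
    assert (E3 : Rabs X * (w * t / 2) <= (K * t) ^ 2 * w) by nra.
    assert (E4 : Rabs X * t <= 2 * K ^ 2 * t * t).
    { apply Rmult_le_reg_r with (w / 2). lra. nra. }
    apply Rmult_le_reg_r with t. lra. lra. }
  assert (HP : Rabs (z t * dz t) <= K ^ 2 * t).
  { rewrite Rabs_mult. pose proof (Rabs_pos (z t)). pose proof (Rabs_pos (dz t)).
    apply Rle_trans with (K * t * K). apply Rmult_le_compat; lra. nra. }
  apply Rle_trans with (Rabs (z t * dz t) + Rabs X).
  { unfold Rminus. rewrite <- (Rabs_Ropp X). apply Rabs_triang. }
  assert (3 * K ^ 2 * t <= eps).
  { assert (t <= eps / (3 * K ^ 2 + 1)) by lra.
    assert (0 <= K^2) by apply pow2_ge_0.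
    assert (t * (3 * K ^ 2 + 1) <= eps).
    { apply Rle_trans with (eps / (3 * K ^ 2 + 1) * (3 * K ^ 2 + 1)).
      apply Rmult_le_compat_r; lra. right; field; lra. }
    nra. }
  lra.
Qed.
Lemma Y_left e t : t <= cC e -> Yf e t = sin (wW e * t) /\ DYf e t = wW e * cos (wW e * t).
Proof. intros H. unfold Yf, DYf, pw. destruct (Rle_dec t (cC e)); [auto|lra]. Qed.

Lemma Y_right e t : 0 < e <= 1/2 -> 1 - cC e <= t ->
  Yf e t = sin (wW e * (1 - t)) /\ DYf e t = - (wW e * cos (wW e * (1 - t))).
Proof. intros He H. pose proof (c_bd e He). unfold Yf, DYf, pw.
  destruct (Rle_dec t (cC e)); [lra|]. destruct (Rlt_dec t (1 - cC e)); [lra|auto]. Qed.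

Lemma Q_left e t : 0 < e <= 1/2 -> t <= cC e -> Qf e t = 0.
Proof. intros He H. apply Q_out; auto. apply Pa_out; auto. Qed.
Lemma Q_right e t : 0 < e <= 1/2 -> 1 - cC e <= t -> Qf e t = 0.
Proof. intros He H. apply Q_out; auto. apply Pa_out; auto. Qed.

Lemma smallest e m : 0 < e <= 1/2 -> is_eigenvalue (Qf e) m -> wW e ^ 2 <= m.
Proof.
  intros He [z [dz [Hc [Hd [z0 [z1 [x0 [Hx0 Hzx0]]]]]]]].
  apply Rnot_lt_le. intro Hlt.
  pose proof (c_bd e He) as Hcb. pose proof (w_gt e He) as Hw. pose proof PI_RGT_0.
  set (w := wW e) in *. set (c := cC e) in *.
  set (Y := Yf e). set (DY := DYf e).
  set (P := (z * dz - (z * z) * (DY / Y))%F).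
  set (dP := fun t => (dz t - z t * DY t / Y t) ^ 2 + (w ^ 2 - m) * z t ^ 2).
  assert (HP : forall t, 0 < t < 1 -> is_derive P t (dP t)).
  { intros t Ht. destruct (Hd t Ht) as [D1 D2].
    apply is_derive_Reals in D1. apply is_derive_Reals in D2.
    assert (D3 := proj1 (is_derive_Reals _ _ _) (Y_derive e He t)).
    assert (D4 := proj1 (is_derive_Reals _ _ _) (DY_derive e He t)).
    pose proof (Y_pos e He t Ht) as HY. fold Y in HY.
    assert (G := derivable_pt_lim_minus _ _ _ _ _ (derivable_pt_lim_mult _ _ _ _ _ D1 D2)
      (derivable_pt_lim_mult _ _ _ _ _ (derivable_pt_lim_mult _ _ _ _ _ D1 D1)
        (derivable_pt_lim_div _ _ _ _ _ D4 D3 (Rgt_not_eq _ _ HY)))).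
    apply is_derive_Reals. unfold P.
    match type of G with derivable_pt_lim _ _ ?L => replace (dP t) with L end; [exact G|].
    unfold dP. rewrite (Y_eq e He t). fold Y DY. fold w. unfold Rsqr, div_fct, mult_fct. field. apply Rgt_not_eq; exact HY. }
  assert (HdP : forall t, 0 <= dP t).
  { intro t. unfold dP. pose proof (pow2_ge_0 (dz t - z t * DY t / Y t)). pose proof (pow2_ge_0 (z t)). nra. }
  assert (Mono : forall s t, 0 < s -> s <= t -> t < 1 -> P s <= P t).
  { intros s t Hs Hst Ht. destruct (Req_dec s t) as [E|E]; [subst; lra|].
    destruct (MVT_gen P s t dP) as [xi [Hxi Heq]].
    - intros x Hx. rewrite Rmin_left in Hx by lra. rewrite Rmax_right in Hx by lra. apply HP; lra.
    - intros x Hx. rewrite Rmin_left in Hx by lra. rewrite Rmax_right in Hx by lra.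
      apply (der_cont _ _ _ (HP x ltac:(lra))).
    - pose proof (HdP xi). nra. }
  assert (N0 : forall eps, 0 < eps -> exists d, 0 < d /\ forall t, 0 < t < d -> Rabs (P t) <= eps).
  { intros eps Heps.
    destruct (near0 z dz m w c ltac:(lra) ltac:(lra) ltac:(lra)) with (eps := eps) as [d [Hd0 Hdd]]; auto.
    - intros eta Heta. destruct (within_eps z 0 (Hc 0 ltac:(lra)) eta Heta) as [d [Hd0 Hdd]].
      exists (Rmin d 1). split. apply Rmin_pos; lra. intros t Ht.
      pose proof (Rmin_l d 1). pose proof (Rmin_r d 1).
      specialize (Hdd t ltac:(lra)). rewrite z0, !Rminus_0_r in Hdd. apply Hdd. rewrite Rabs_right; lra.
    - intros x Hx. destruct (Hd x ltac:(lra)) as [D1 D2]. split; auto.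
      rewrite (Q_left e x He ltac:(unfold c in Hx; lra)) in D2.
      replace (- m * z x) with (0 * z x - m * z x) by ring. exact D2.
    - exists (Rmin d c). split. apply Rmin_pos; lra. intros t Ht.
      pose proof (Rmin_l d c). pose proof (Rmin_r d c).
      destruct (Y_left e t ltac:(unfold c in *; lra)) as [E1 E2].
      specialize (Hdd t ltac:(lra)).
      assert (sin (w * t) <> 0).
      { apply Rgt_not_eq. pose proof (wc e He) as Hwc. unfold uU in Hwc.
        fold w c in Hwc. apply sin_gt_0; nra. }
      unfold P, minus_fct, mult_fct, div_fct. unfold Y, DY. rewrite E1, E2. fold w.
      replace (z t * dz t - z t * z t * (w * cos (w * t) / sin (w * t))) with
        (z t * dz t - z t ^ 2 * (w * cos (w * t)) / sin (w * t)) by (field; auto).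
      exact Hdd. }
  assert (N1 : forall eps, 0 < eps -> exists d, 0 < d /\ forall t, 1 - d < t < 1 -> Rabs (P t) <= eps).
  { intros eps Heps.
    destruct (near0 (fun t => z (1 - t)) (fun t => - dz (1 - t)) m w c ltac:(lra) ltac:(lra) ltac:(lra))
      with (eps := eps) as [d [Hd0 Hdd]]; auto.
    - intros eta Heta. destruct (within_eps z 1 (Hc 1 ltac:(lra)) eta Heta) as [d [Hd0 Hdd]].
      exists (Rmin d 1). split. apply Rmin_pos; lra. intros t Ht.
      pose proof (Rmin_l d 1). pose proof (Rmin_r d 1).
      specialize (Hdd (1 - t) ltac:(lra)). rewrite z1, !Rminus_0_r in Hdd. apply Hdd.
      replace (1 - t - 1) with (- t) by ring. rewrite Rabs_Ropp, Rabs_right; lra.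
    - intros x Hx. destruct (Hd (1 - x) ltac:(lra)) as [D1 D2].
      rewrite (Q_right e (1 - x) He ltac:(unfold c in Hx; lra)) in D2.
      split.
      + apply is_derive_Reals. apply is_derive_Reals in D1.
        assert (Hl : derivable_pt_lim (fun t => 1 - t) x (-1)).
        { apply is_derive_Reals. auto_derive; auto; ring. }
        pose proof (derivable_pt_lim_comp _ _ _ _ _ Hl D1) as G.
        replace (- dz (1 - x)) with (dz (1 - x) * -1) by ring. exact G.
      + apply is_derive_Reals. apply is_derive_Reals in D2.
        assert (Hl : derivable_pt_lim (fun t => 1 - t) x (-1)).
        { apply is_derive_Reals. auto_derive; auto; ring. }
        pose proof (derivable_pt_lim_comp _ _ _ _ _ Hl D2) as G.
        pose proof (derivable_pt_lim_opp _ _ _ G) as G2.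
        replace (- m * z (1 - x)) with (- ((0 * z (1 - x) - m * z (1 - x)) * -1)) by ring. exact G2.
    - exists (Rmin d c). split. apply Rmin_pos; lra. intros t Ht.
      pose proof (Rmin_l d c). pose proof (Rmin_r d c).
      destruct (Y_right e t He ltac:(unfold c in *; lra)) as [E1 E2].
      specialize (Hdd (1 - t) ltac:(lra)).
      replace (1 - (1 - t)) with t in Hdd by ring.
      assert (sin (w * (1 - t)) <> 0).
      { apply Rgt_not_eq. pose proof (wc e He) as Hwc. unfold uU in Hwc.
        fold w c in Hwc. apply sin_gt_0; nra. }
      unfold P, minus_fct, mult_fct, div_fct. unfold Y, DY. rewrite E1, E2. fold w.
      replace (z t * dz t - z t * z t * (- (w * cos (w * (1 - t))) / sin (w * (1 - t)))) with
        (- (z t * - dz t - z t ^ 2 * (w * cos (w * (1 - t))) / sin (w * (1 - t)))) by (field; auto).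
      rewrite Rabs_Ropp. exact Hdd. }
  assert (Zero : forall t, 0 < t < 1 -> P t = 0).
  { intros t Ht. apply Rle_antisym.
    - apply Rnot_lt_le. intro Hp.
      destruct (N1 (P t / 2) ltac:(lra)) as [d [Hd0 Hdd]].
      set (s := 1 - Rmin d (1 - t) / 2).
      assert (0 < Rmin d (1 - t)) by (apply Rmin_pos; lra).
      pose proof (Rmin_l d (1 - t)). pose proof (Rmin_r d (1 - t)).
      specialize (Hdd s ltac:(unfold s; lra)).
      pose proof (Mono t s ltac:(lra) ltac:(unfold s; lra) ltac:(unfold s; lra)).
      apply Rabs_le_between in Hdd. lra.
    - apply Rnot_lt_le. intro Hp.
      destruct (N0 (- P t / 2) ltac:(lra)) as [d [Hd0 Hdd]].
      set (s := Rmin d t / 2).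
      assert (0 < Rmin d t) by (apply Rmin_pos; lra).
      pose proof (Rmin_l d t). pose proof (Rmin_r d t).
      specialize (Hdd s ltac:(unfold s; lra)).
      pose proof (Mono s t ltac:(unfold s; lra) ltac:(unfold s; lra) ltac:(lra)).
      apply Rabs_le_between in Hdd. lra. }
  assert (Hr : 0 < Rmin x0 (1 - x0)) by (apply Rmin_pos; lra).
  assert (Hl0 : is_derive P x0 0).
  { apply (is_derive_ext_loc (fun _ => 0)).
    - exists (mkposreal _ Hr). intros y Hy. simpl in Hy.
      change (Rabs (y - x0) < Rmin x0 (1 - x0)) in Hy.
      pose proof (Rmin_l x0 (1 - x0)). pose proof (Rmin_r x0 (1 - x0)).
      apply Rabs_lt_between in Hy. rewrite Zero; auto. lra.
    - auto_derive; auto. }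
  pose proof (is_derive_unique _ _ _ Hl0) as U1.
  pose proof (is_derive_unique _ _ _ (HP x0 Hx0)) as U2.
  rewrite U1 in U2.
  assert (0 < (w ^ 2 - m) * z x0 ^ 2).
  { apply Rmult_lt_0_compat. lra.
    replace (z x0 ^ 2) with (Rsqr (z x0)) by (unfold Rsqr; ring). apply Rsqr_pos_lt; auto. }
  pose proof (pow2_ge_0 (dz x0 - z x0 * DY x0 / Y x0)). unfold dP in U2. lra.
Qed.
Lemma rpow0 g : rpow 0 g = 0.
Proof. unfold rpow. destruct (Req_EM_T 0 0); [auto|congruence]. Qed.

Lemma rpow_bd v g : 1 <= g -> 0 <= v <= 1 -> 0 <= rpow v g <= v.
Proof. intros Hg Hv. unfold rpow. destruct (Req_EM_T v 0) as [E|E]; [lra|].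
  unfold Rpower. split. left; apply exp_pos.
  assert (Hl : ln v <= 0) by (rewrite <- ln_1; apply ln_le; lra).
  assert (g * ln v <= ln v) by nra.
  rewrite <- (exp_ln v) at 2 by lra.
  destruct (Rle_lt_or_eq_dec _ _ H) as [H'|H']. left; apply exp_increasing; auto. rewrite H'; lra. Qed.

Lemma rpow_cont (f : R -> R) g t : 1 <= g -> (forall u, 0 <= f u) -> continuous f t ->
  continuous (fun u => rpow (f u) g) t.
Proof. intros Hg Hf Hc. destruct (Hf t) as [Hp|H0].
  - apply (continuous_comp f (fun y => rpow y g)); auto.
    apply (continuous_ext_loc _ (fun y => exp (g * ln y))).
    + exists (mkposreal _ Hp). intros y Hy. simpl in Hy. change (Rabs (y - f t) < f t) in Hy.
      apply Rabs_lt_between in Hy. unfold rpow. destruct (Req_EM_T y 0); [lra|]. reflexivity.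
    + apply (ex_derive_continuous (V := R_NormedModule) (fun y => exp (g * ln y))). auto_derive. auto.
  - apply (proj2 (filterlim_locally _ _)). intros eps.
    assert (He : 0 < Rmin eps 1) by (apply Rmin_pos; [apply cond_pos|lra]).
    assert (Hl := proj1 (filterlim_locally _ _) Hc (mkposreal _ He)).
    simpl in Hl. eapply filter_imp; [|exact Hl]. intros u Hu.
    change (Rabs (f u - f t) < Rmin eps 1) in Hu. rewrite <- H0 in Hu.
    change (Rabs (rpow (f u) g - rpow (f t) g) < eps). rewrite <- H0, rpow0. rewrite Rminus_0_r in *.
    pose proof (Rmin_l eps 1). pose proof (Rmin_r eps 1). pose proof (Hf u).
    rewrite Rabs_right in Hu by lra.
    pose proof (rpow_bd (f u) g Hg ltac:(lra)). rewrite Rabs_right; lra.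
Qed.

Lemma Q_cont e t : 0 < e <= 1/2 -> continuous (Qf e) t.
Proof. intros He. destruct (sk_bd e He) as [Hs Hk].
  assert (HP : continuous (Pa e) t) by (apply (ex_derive_continuous (V := R_NormedModule) (Pa e)); unfold Pa; auto_derive; auto).
  assert (HA : continuous (fun u => Rabs (Pa e u - sS e)) t).
  { apply continuous_Rabs_comp. apply (continuous_plus (Pa e) (fun _ => - sS e)); auto. apply continuous_const. }
  assert (HD : continuous (fun u => (sS e + Pa e u + Rabs (Pa e u - sS e)) * / 2) t).
  { apply (continuous_mult (fun u => sS e + Pa e u + Rabs (Pa e u - sS e)) (fun _ => / 2)); [|apply continuous_const].
    apply (continuous_plus (fun u => sS e + Pa e u) (fun u => Rabs (Pa e u - sS e))); auto.
    apply (continuous_plus (fun _ => sS e) (Pa e)); auto. apply continuous_const. }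
  assert (Hpos : 0 < (sS e + Pa e t + Rabs (Pa e t - sS e)) * / 2).
  { pose proof (Rle_abs (sS e - Pa e t)). rewrite Rabs_minus_sym in H. lra. }
  assert (HI := continuous_Rinv_comp _ _ HD ltac:(lra)).
  assert (HQ : continuous (fun u => wW e ^ 2 * (1 + - (sS e * / ((sS e + Pa e u + Rabs (Pa e u - sS e)) * / 2)))) t).
  { apply (continuous_mult (fun _ => wW e ^ 2)); [apply continuous_const|].
    apply (continuous_plus (fun _ => 1)); [apply continuous_const|].
    apply (continuous_opp (fun u => sS e * / ((sS e + Pa e u + Rabs (Pa e u - sS e)) * / 2))).
    apply (continuous_mult (fun _ => sS e)); [apply continuous_const|]. exact HI. }
  eapply continuous_ext; [|exact HQ]. intro u. unfold Qf. reflexivity.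
Qed.
Lemma RInt_zero (F : R -> R) a b : a <= b -> (forall x, a < x < b -> F x = 0) ->
  ex_RInt F a b /\ RInt F a b = 0.
Proof. intros Hab HF.
  assert (HF' : forall x, Rmin a b < x < Rmax a b -> (fun _ => 0) x = F x).
  { intros x Hx. rewrite Rmin_left, Rmax_right in Hx by lra. symmetry; apply HF; auto. }
  split.
  - apply (ex_RInt_ext (fun _ => 0)); auto. apply ex_RInt_const.
  - rewrite <- (RInt_ext (fun _ => 0) F a b HF'). rewrite RInt_const.
    unfold scal; simpl; unfold mult; simpl. ring.
Qed.

Theorem mainTheorem14 (r : R -> R) (g : R) :
  cont_open01 r ->
  (forall a b, 0 < a -> a <= b -> b < 1 ->
     exists m, 0 < m /\ forall x, a <= x <= b -> m <= r x) ->
  1 < g ->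
  exists d, 0 < d /\ exists q : R -> R, in_B r g d q.
Proof.
  intros Hr Hlow Hg.
  destruct (continuity_ab_maj r (1/4) (3/4)) as [Mx [HMx HMxr]].
  { lra. }
  { intros x Hx. apply continuity_pt_filterlim. apply Hr. lra. }
  destruct (Hlow (1/4) (3/4)) as [mlow [Hm Hmr]]; try lra.
  set (M := Rmax 1 (r Mx)).
  assert (HM1 : 1 <= M) by apply Rmax_l.
  assert (HM2 : r Mx <= M) by apply Rmax_r.
  set (e := Rmin (1/2) (1 / (36 * M))).
  assert (HeM : 0 < 1 / (36 * M)) by (apply Rdiv_lt_0_compat; lra).
  assert (He : 0 < e <= 1/2) by (split; [apply Rmin_pos; lra | apply Rmin_l]).
  assert (He2 : e <= 1 / (36 * M)) by apply Rmin_r.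
  assert (HQ : forall t, Qf e t <= 1 / (2 * M)).
  { intro t. pose proof (Q_small e t He).
    assert (36 * e ^ 2 <= 36 * ((1 / (36 * M)) * (1/2))).
    { replace (36 * e ^ 2) with (36 * (e * e)) by ring. apply Rmult_le_compat_l. lra.
      apply Rmult_le_compat; lra. }
    replace (36 * ((1 / (36 * M)) * (1/2))) with (1 / (2 * M)) in H0 by (field; lra). lra. }
  assert (HQ1 : forall t, Qf e t <= 1).
  { intro t. pose proof (HQ t). assert (1 / (2 * M) <= 1).
    { apply Rmult_le_reg_r with (2 * M). lra. field_simplify; lra. } lra. }
  pose proof (w_gt e He) as Hw. pose proof PI_RGT_0.
  pose proof (c_bd e He) as Hc.
  exists (wW e ^ 2 - PI ^ 2). split. { nra. }
  exists (Qf e).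
  set (F := fun x => r x * rpow (Qf e x) g).
  split; [|split; [|split]].
  - split; [intros; apply Q_nonneg; auto|].
    destruct (RInt_zero F 0 (cC e)) as [E1 R1]; [lra| |].
    { intros x Hx. unfold F. rewrite (Q_left e x He) by lra. rewrite rpow0. ring. }
    destruct (RInt_zero F (1 - cC e) 1) as [E3 R3]; [lra| |].
    { intros x Hx. unfold F. rewrite (Q_right e x He) by lra. rewrite rpow0. ring. }
    assert (E2 : ex_RInt F (cC e) (1 - cC e)).
    { apply (ex_RInt_continuous (V := R_CompleteNormedModule) F). intros z Hz. rewrite Rmin_left, Rmax_right in Hz by lra.
      apply (continuous_mult r (fun u => rpow (Qf e u) g)).
      - apply Hr. lra.
      - apply rpow_cont. lra. intro u; apply Q_nonneg; auto. apply Q_cont; auto. }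
    assert (E23 : ex_RInt F (cC e) 1) by (apply (ex_RInt_Chasles _ _ (1 - cC e)); auto).
    assert (E : ex_RInt F 0 1) by (apply (ex_RInt_Chasles _ _ (cC e)); auto).
    split; [exact E|]. change (RInt F 0 1 <= 1).
    rewrite <- (RInt_Chasles F 0 (cC e) 1) by auto.
    rewrite <- (RInt_Chasles F (cC e) (1 - cC e) 1) by auto.
    change (plus (RInt F 0 (cC e)) (plus (RInt F (cC e) (1 - cC e)) (RInt F (1 - cC e) 1)))
      with (RInt F 0 (cC e) + (RInt F (cC e) (1 - cC e) + RInt F (1 - cC e) 1)).
    rewrite R1, R3.
    assert (RInt F (cC e) (1 - cC e) <= RInt (fun _ => 1/2) (cC e) (1 - cC e)).
    { apply RInt_le; auto. lra. apply ex_RInt_const.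
      intros x Hx. unfold F.
      pose proof (Hmr x ltac:(lra)). pose proof (HMx x ltac:(lra)).
      pose proof (Q_nonneg e x He). pose proof (HQ1 x). pose proof (HQ x).
      destruct (rpow_bd (Qf e x) g ltac:(lra) ltac:(lra)).
      apply Rle_trans with (M * (1 / (2 * M))).
      apply Rmult_le_compat; lra. right; field; lra. }
    rewrite RInt_const in H0. unfold scal in H0; simpl in H0; unfold mult in H0; simpl in H0.
    nra.
  - intros x _. apply Q_cont; auto.
  - exists (cC e), (1 - cC e). split; [lra|split; [lra|split; [lra|]]].
    intros x [Hx|Hx]. apply Q_left; auto; lra. apply Q_right; auto; lra.
  - exists (wW e ^ 2). split; [split|].
    + exists (Yf e), (DYf e). split; [|split; [|split; [|split]]].
      * intros x Hx. apply (filterlim_filter_le_1 (F := locally x)). apply filter_le_within.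
        apply (ex_derive_continuous (V := R_NormedModule) (Yf e)). exists (DYf e x). apply Y_derive; auto.
      * intros x Hx. split. apply Y_derive; auto. rewrite <- Y_eq by auto. apply DY_derive; auto.
      * destruct (Y_left e 0 ltac:(lra)) as [E _]. rewrite E, Rmult_0_r, sin_0. auto.
      * destruct (Y_right e 1 He ltac:(lra)) as [E _]. rewrite E. replace (1 - 1) with 0 by ring.
        rewrite Rmult_0_r, sin_0. auto.
      * exists (1/2). split. lra. apply Rgt_not_eq. apply Y_pos; auto; lra.
    + intros m Hm'. apply smallest; auto.
    + lra.
Qed.
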